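(* Let $G$ be a group equipped with a $\sigma$-field, acting measurably on a measurable sample space $\Omega_X$ and on a measurable action space $\Omega_A$, and let the parameter space be $\Omega_\Theta=G$, with $G$ acting on it by left multiplication $(g,\theta)\mapsto g\theta$. Let $\{P_X^\theta:\theta\in G\}$ be a family of probability measures on $\Omega_X$ that is group invariant: for all $g,\theta\in G$, the law of $gX$ when $X\sim P_X^\theta$ equals $P_X^{g\theta}$. Let $\gamma:G\times\Omega_A\to[0,\infty]$ be a measurable loss that is invariant, $\gamma(g\theta,ga)=\gamma(\theta,a)$ for all $g,\theta\in G$, $a\in\Omega_A$, and let $\delta:\Omega_X\to\Omega_A$ be a measurable equivariant rule, $\delta(gx)=g\delta(x)$ for all $g\in G$, $x\in\Omega_X$. Let $U$ be a random element of $\Omega_X$ with law $Q=P_X^e$ ($e$ the identity of $G$). Let $\phi:\Omega_X\to\Omega_Y$ be a measurable maximal invariant (i.e. $\phi(gx)=\phi(x)$ for all $g,x$, and $\phi(x)=\phi(u)$ implies $x\in Gu$), and suppose there is a measurable selection $s:\{(x,u):\phi(x)=\phi(u)\}\to G$ with $x=s(x,u)\,u$ for all such $(x,u)$. For $x\in\Omega_X$ define the random element $\Theta^x=s(x,U)$ on the event $\{\phi(U)=\phi(x)\}$; the conditional law of $\Theta^x$ given $\phi(U)=\phi(x)$ is called a fiducial distribution. Let $(Q^y)_y$ be a regular conditional distribution of $U$ given $\phi(U)=y$ with $Q^y$ concentrated on $\phi^{-1}(y)$ for $Q_Y$-a.e. $y$, where $Q_Y$ is the law of $\phi(U)$. Then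 for every $\theta\in G$ the risk satisfies $$\rho(\theta):=\int \gamma(\theta,\delta(x))\,P_X^\theta(dx)=\int\Big[\int\gamma(e,\delta(u))\,Q^y(du)\Big]\,Q_Y(dy),$$ so in particular $\rho(\theta)$ does not depend on $\theta$; and for $Q_Y$-a.e. $y$ and every $x\in\Omega_X$ with $\phi(x)=y$, $$\int\gamma(e,\delta(u))\,Q^y(du)=\int\gamma\big(s(x,u),\delta(x)\big)\,Q^y(du)=\mathbb{E}\big[\gamma(\Theta^x,\delta(x))\,\big|\,\phi(U)=y\big].$$ That is, the risk of any equivariant rule is determined by the fiducial distribution (for any choice of measurable selection $s$).
   Context: A statistical decision problem: loss $\gamma(\theta,a)$ of action $a$ under parameter $\theta$, risk $\rho(\theta)=\mathbb{E}^\theta\gamma(\theta,\delta(X))$ of a rule $\delta$. An orbit of $x$ is $Gx=\{gx:g\in G\}$. The model parameter space $G$ with left multiplication is a principal homogeneous space (free and transitive action) for $G$. *)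

(* Defs.v *)
From HB Require Import structures.
From mathcomp Require Import all_boot all_order all_algebra.
From mathcomp Require Import all_classical all_reals all_analysis.
From mathcomp Require Import measurable_realfun.
Set Implicit Arguments. Unset Strict Implicit. Unset Printing Implicit Defensive.

(* Main.v *)
Require Import Defs.
From HB Require Import structures.
From mathcomp Require Import all_boot all_order all_algebra.
From mathcomp Require Import all_classical all_reals all_analysis.
From mathcomp Require Import measurable_realfun.
Import Order.TTheory GRing.Theory Num.Theory.
Local Open Scope classical_set_scope.
Local Open Scope ring_scope.
Import HBNNSimple.

Lemma ge0_integral_conull d (T : measurableType d) (R : realType)
  (mu : {measure set T -> \bar R}) (f : T -> \bar R) (N : set T) :
  measurable N -> mu N = 0%E -> (forall x, (0 <= f x)%E) ->
  (\int[mu]_x f x = \int[mu]_(x in ~` N) f x)%E.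
Proof.
move=> mN N0 f0.
rewrite ge0_integralTE // ge0_integralE; last by move=> x _; exact: f0.
apply/eqP; rewrite eq_le; apply/andP; split; last first.
  apply: ereal_sup_le => _ [h hf <-]; exists h => // x.
  apply: (le_trans (hf x)); rewrite /patch; case: ifP => _ //; exact: f0.
apply: ge_ereal_sup => _ [h hf <-].
have mCN : measurable (~` N) by exact: measurableC.
pose h' := mul_nnsfun h (indic_nnsfun R mCN).
apply: ereal_sup_ubound; exists h'.
  move=> x /=; rewrite /patch /= mindicE /=; case: ifPn => xN.
    by rewrite mulr1; exact: hf.
  by rewrite mulr0.
rewrite -!integralT_nnsfun.
rewrite (ge0_negligible_integral _ _ _ _ N0) //; last 2 first.
  - by apply/measurable_EFinP; exact: measurable_funP.
  - by move=> x _; rewrite lee_fin.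
rewrite [RHS](ge0_negligible_integral _ _ _ _ N0) //; last 2 first.
  - by apply/measurable_EFinP; exact: measurable_funP.
  - by move=> x _; rewrite lee_fin.
apply: eq_integral => x; rewrite inE => -[_ xN] /=.
by rewrite mindicE /= mem_set // mulr1.
Qed.
Section disint.
Context (R : realType) (dX dY : measure_display)
  (X : measurableType dX) (Y : measurableType dY)
  (QY : probability Y R) (Qc : Y -> probability X R)
  (mQc : forall B : set X, measurable B -> measurable_fun [set: Y] (fun y => Qc y B)).

Definition kl_ (_ : unit) : {measure set Y -> \bar R} := QY.
Definition kk_ (p : unit * Y) : {measure set X -> \bar R} := Qc p.2.

Let mkl U : measurable U -> measurable_fun [set: unit] (kl_ ^~ U).
Proof. by move=> _; exact: measurable_cst. Qed.
HB.instance Definition _ := @isKernel.Build _ _ _ _ R kl_ mkl.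
Let pkl x : kl_ x [set: Y] = 1%E.
Proof. by exact: probability_setT. Qed.
HB.instance Definition _ := @Kernel_isProbability.Build _ _ _ _ R kl_ pkl.

Let mkk U : measurable U -> measurable_fun [set: unit * Y] (kk_ ^~ U).
Proof. move=> mU; rewrite /kk_ /=.
exact: (@measurableT_comp _ _ _ _ _ _ (fun y => Qc y U) _ snd (mQc _ mU) measurable_snd). Qed.
HB.instance Definition _ := @isKernel.Build _ _ _ _ R kk_ mkk.
Let pkk x : kk_ x [set: X] = 1%E.
Proof. by exact: probability_setT. Qed.
HB.instance Definition _ := @Kernel_isProbability.Build _ _ _ _ R kk_ pkk.

Lemma disint_integral (Pe : {measure set X -> \bar R})
  (HP : forall B, measurable B -> Pe B = (\int[QY]_y Qc y B)%E)
  (f : X -> \bar R) : (forall x, 0 <= f x)%E -> measurable_fun [set: X] f ->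
  (\int[Pe]_x f x = \int[QY]_y \int[Qc y]_x f x)%E.
Proof.
move=> f0 mf.
rewrite (eq_measure_integral (kcomp kl_ kk_ tt)); last first.
  by move=> A mA _; rewrite HP.
exact: (integral_kcomp kl_ kk_ tt f0 mf).
Qed.
End disint.
Theorem theorem1 (R : realType)
  (dG dX dA dY : measure_display)
  (G : measurableType dG) (X : measurableType dX)
  (A : measurableType dA) (Y : measurableType dY)
  (* group structure on G *)
  (mul : G -> G -> G) (e : G) (inv : G -> G)
  (mulA : forall g h k, mul g (mul h k) = mul (mul g h) k)
  (mul1g : forall g, mul e g = g)
  (mulVg : forall g, mul (inv g) g = e)
  (* measurable actions of G on X and on A *)
  (actX : G -> X -> X) (actA : G -> A -> A)
  (actX1 : forall x, actX e x = x)
  (actXM : forall g h x, actX (mul g h) x = actX g (actX h x))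
  (actA1 : forall a, actA e a = a)
  (actAM : forall g h a, actA (mul g h) a = actA g (actA h a))
  (mactX : measurable_fun [set: G * X] (fun p => actX p.1 p.2))
  (mactA : measurable_fun [set: G * A] (fun p => actA p.1 p.2))
  (* group invariant model, parameter space G acted on by left multiplication *)
  (P : G -> probability X R)
  (Pinv : forall g theta (B : set X), measurable B ->
     P theta (actX g @^-1` B) = P (mul g theta) B)
  (* measurable invariant loss with values in [0, +oo] *)
  (gamma : G -> A -> \bar R)
  (gamma_ge0 : forall theta a, (0 <= gamma theta a)%E)
  (mgamma : measurable_fun [set: G * A] (fun p => gamma p.1 p.2))
  (gamma_inv : forall g theta a, gamma (mul g theta) (actA g a) = gamma theta a)
  (* measurable equivariant rule *)
  (delta : X -> A)
  (mdelta : measurable_fun [set: X] delta)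
  (delta_eqv : forall g x, delta (actX g x) = actA g (delta x))
  (* measurable maximal invariant *)
  (phi : X -> Y)
  (mphi : measurable_fun [set: X] phi)
  (phi_inv : forall g x, phi (actX g x) = phi x)
  (phi_max : forall x u, phi x = phi u -> exists g, x = actX g u)
  (* measurable selection on {(x,u) | phi x = phi u} *)
  (s : X -> X -> G)
  (* measurability w.r.t. the trace sigma-field on {(x,u) | phi x = phi u} *)
  (ms : forall B : set G, measurable B ->
     exists M : set (X * X), measurable M /\
       [set p : X * X | phi p.1 = phi p.2] `&` (fun p => s p.1 p.2) @^-1` B
       = [set p : X * X | phi p.1 = phi p.2] `&` M)
  (s_spec : forall x u, phi x = phi u -> x = actX (s x u) u)
  (* QY : the law of phi(U), U ~ Q := P e *)
  (QY : probability Y R)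
  (QY_law : forall B : set Y, measurable B -> QY B = P e (phi @^-1` B))
  (* (Qc y)_y : regular conditional distribution of U given phi(U) = y *)
  (Qc : Y -> probability X R)
  (mQc : forall B : set X, measurable B -> measurable_fun [set: Y] (fun y => Qc y B))
  (Qc_disint : forall (B : set X) (C : set Y), measurable B -> measurable C ->
     (P e (B `&` phi @^-1` C) = \int[QY]_(y in C) Qc y B)%E)
  (* Qc y is concentrated on phi^-1(y) for QY-a.e. y *)
  (Qc_conc : {ae QY, forall y, (Qc y).-negligible (~` (phi @^-1` [set y]))}) :
  (forall theta : G,
     (\int[P theta]_x gamma theta (delta x)
      = \int[QY]_y (\int[Qc y]_u gamma e (delta u)))%E) /\
  {ae QY, forall y, forall x, phi x = y ->
     (\int[Qc y]_u gamma e (delta u) = \int[Qc y]_u gamma (s x u) (delta x))%E}.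
Proof.
have mulgV g : mul g (inv g) = e.
  have h1 : mul (inv (inv g)) (inv g) = e by rewrite mulVg.
  by rewrite -[LHS]mul1g -h1 -mulA (mulA (inv g)) mulVg mul1g h1.
have mulg1 g : mul g e = g by rewrite -(mulVg g) mulA mulgV mul1g.
have key g a : gamma g (actA g a) = gamma e a by rewrite -{1}(mulg1 g) gamma_inv.
have mgam th : measurable_fun [set: A] (gamma th).
  have mp : measurable_fun [set: A] (fun a => (th, a)).
    by apply: measurable_fun_pair; [exact: measurable_cst|exact: measurable_id].
  exact: (measurableT_comp mgamma mp).
have mge : measurable_fun [set: X] (fun u => gamma e (delta u)).
  exact: (measurableT_comp (mgam e) mdelta).
have PeQ : (\int[P e]_u gamma e (delta u) = \int[QY]_y \int[Qc y]_u gamma e (delta u))%E.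
  apply: (@disint_integral R dX dY X Y QY Qc mQc (P e)) => //.
  by move=> B mB; rewrite -Qc_disint // preimage_setT setIT.
split.
  move=> th.
  have mact : measurable_fun [set: X] (actX th).
    have mp : measurable_fun [set: X] (fun x => (th, x)).
      by apply: measurable_fun_pair; [exact: measurable_cst|exact: measurable_id].
    exact: (measurableT_comp mactX mp).
  rewrite (eq_measure_integral (pushforward (P e) (actX th))); last first.
    by move=> B mB _; have := Pinv th e B mB; rewrite mulg1 => h; exact: (esym h).
  have mf : measurable_fun [set: X] (fun x => gamma th (delta x)).
    exact: (measurableT_comp (mgam th) mdelta).
  rewrite (@ge0_integral_pushforward _ _ _ _ _ _ mact (P e) _ _ measurableT mf); last by move=> *; exact: gamma_ge0.
  rewrite preimage_setT -PeQ; apply: eq_integral => u _ /=.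
  by rewrite delta_eqv key.
apply: filterS Qc_conc => y [N [mN N0 sub]] x phixy.
rewrite (@ge0_integral_conull _ _ _ _ _ N mN N0) //.
rewrite [RHS](@ge0_integral_conull _ _ _ _ _ N mN N0) //.
apply: eq_integral => u; rewrite inE => uN.
have phiu : phi u = y.
  apply: contrapT => hu; apply: uN; apply: sub; exact: hu.
have := s_spec x u; rewrite phixy phiu => /(_ erefl) xE.
have -> : delta x = actA (s x u) (delta u) by rewrite {1}xE delta_eqv.
by rewrite key.
Qed.
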